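(* Let $n\ge1$, $\varepsilon\in D$ and $s\in D^n$, and let $\mu^{(0)},\dots,\mu^{(n)}$, $\Delta_j$, $e_j$, $j'$ be given by the recursive construction below. Then $\mu^{(n)}\in\mathrm{Min}(s)$ (so $\deg\mu^{(j)}=L_j$ for all $0\le j\le n$). Moreover: if $\Delta_n=0$ then $L_n=L_{n-1}$ and $e_n=e_{n-1}+1$; if $\Delta_n\neq0$ then (i) $L_n=\deg\mu^{(n)}=\max\{e_{n-1},0\}+L_{n-1}=n'+1-L_{n'}$, and (ii) $e_n=-|e_{n-1}|+1$.
   Context: Let $D$ be a commutative integral domain with $1\neq 0$. For $s=(s_1,\dots,s_n)\in D^n$ put $\underline{s}=s_1x^{-1}+\cdots+s_nx^{-n}\in D[x,x^{-1}]$; for a Laurent polynomial $F$, $F_k$ is the coefficient of $x^k$; $s^{(i)}=(s_1,\dots,s_i)$. A polynomial $f\in D[x]$ is an annihilator of $s$, $f\in\mathrm{Ann}(s)$, if $f=0$, or $d=\deg f\ge0$ and $(f\cdot\underline{s})_{d-j}=0$ for $d+1\le j\le n$. $\mathrm{Min}(s)$ is the set of nonzero annihilators of least degree; $L(s)$ is that degree, $L_j=L(s^{(j)})$, $L_0=0$. For nonzero $f\in D[x]$ and $t\in D^m$, $\Delta(f,t)=(f\cdot\underline{t})_{\deg f-m}$. Recursive construction (relative to a fixed $\varepsilon\in D$): put $\mu^{(-1)}=\varepsilon$, $\mu^{(0)}=1$, $\Delta_0=1$, $0'=-1$, and for $j\ge 0$ let $e_j=j+1-2\deg\mu^{(j)}$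 (so $e_0=1$). For $j=1,\dots,n$ successively define: $\Delta_j=\Delta(\mu^{(j-1)},s^{(j)})$; the index $j'=(j-1)'$ if $\Delta_j=0$ or $e_{j-1}\le 0$, and $j'=j-1$ if $\Delta_j\neq0$ and $e_{j-1}>0$; $\Delta'_j=\Delta_{(j-1)'+1}$; and $\mu^{(j)}=\mu^{(j-1)}$ if $\Delta_j=0$, otherwise $\mu^{(j)}=\Delta'_j\,x^{\max\{e_{j-1},0\}}\mu^{(j-1)}-\Delta_j\,x^{\max\{-e_{j-1},0\}}\mu^{((j-1)')}$. *)

(* Defs.v *)
From HB Require Import structures.
From mathcomp Require Import all_boot all_order all_algebra.
From Stdlib Require Import ClassicalEpsilon.
Set Implicit Arguments. Unset Strict Implicit. Unset Printing Implicit Defensive.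
Import Order.TTheory GRing.Theory Num.Theory.
Local Open Scope ring_scope.

Section BM.
Variable D : idomainType.

Definition deg (f : {poly D}) : nat := (size f).-1.

(* (f * s_)_k  where s_ = s_1 x^-1 + ... + s_n x^-n, s = [:: s_1; ...; s_n] *)
Definition lcoef (f : {poly D}) (s : seq D) (k : int) : D :=
  \sum_(i < size s)
     (if (0 <= k + (i.+1)%:Z) then f`_(absz (k + (i.+1)%:Z)) else 0) * s`_i.

Definition ann (f : {poly D}) (s : seq D) : Prop :=
  f = 0 \/
  (forall j : nat, (deg f < j <= size s)%N ->
     lcoef f s ((deg f)%:Z - j%:Z) = 0).

Definition isMin (f : {poly D}) (s : seq D) : Prop :=
  f != 0 /\ ann f s /\
  (forall g : {poly D}, g != 0 -> ann g s -> (deg f <= deg g)%N).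

Definition hasAnnDeg (s : seq D) (d : nat) : bool :=
  if excluded_middle_informative
       (exists f : {poly D}, f != 0 /\ ann f s /\ deg f = d)
  then true else false.

Definition Lof (s : seq D) : nat :=
  match excluded_middle_informative (exists d, hasAnnDeg s d) with
  | left H => ex_minn H
  | right _ => 0%N
  end.

Definition Delta (f : {poly D}) (t : seq D) : D :=
  lcoef f t ((deg f)%:Z - (size t)%:Z).

Definition eidx (j : nat) (m : {poly D}) : int := (j.+1)%:Z - (2 * deg m)%N%:Z.

(* state after step j: (mu^(j), j', mu^(j'), Delta_{j'+1}) *)
Fixpoint bmstate (eps : D) (s : seq D) (j : nat)
  : {poly D} * int * {poly D} * D :=
  match j with
  | 0%N => (1, (-1)%R, eps%:P, 1)
  | j1.+1 =>
    let: (m, jp, mp, dp) := bmstate eps s j1 in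
    let dj := Delta m (take j1.+1 s) in
    let e := eidx j1 m in
    if dj == 0 then (m, jp, mp, dp)
    else
      let newm := dp *: ('X^(absz (Num.max e 0)) * m)
                  - dj *: ('X^(absz (Num.max (- e) 0)) * mp) in
      if 0 < e then (newm, j1%:Z, m, dj) else (newm, jp, mp, dp)
  end.

Definition BMmu (eps : D) (s : seq D) (j : nat) : {poly D} :=
  (bmstate eps s j).1.1.1.
Definition BMjp (eps : D) (s : seq D) (j : nat) : int :=
  (bmstate eps s j).1.1.2.
Definition BMDelta (eps : D) (s : seq D) (j : nat) : D :=
  Delta (BMmu eps s j.-1) (take j s).
Definition BMe (eps : D) (s : seq D) (j : nat) : int :=
  eidx j (BMmu eps s j).

End BM.

(* Main.v *)
Require Import Defs.
From HB Require Import structures.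
From mathcomp Require Import all_boot all_order all_algebra.
From Stdlib Require Import Lia ClassicalEpsilon.
Import Order.TTheory GRing.Theory Num.Theory.
Local Open Scope ring_scope.

Definition Sp {D : idomainType} (t : seq D) : {poly D} :=
  foldl (fun p a => p * 'X + a%:P) 0 t.

Lemma Sp_rcons {D : idomainType} (t : seq D) a : Sp (rcons t a) = Sp t * 'X + a%:P.
Proof. by rewrite /Sp foldl_rcons. Qed.

Lemma lcoefE {D : idomainType} (f : {poly D}) t k :
  lcoef f t k = if (0 <= k + (size t)%:Z) then (f * Sp t)`_(absz (k + (size t)%:Z)) else 0.
Proof.
elim/last_ind: t => [|t a IH].
  by rewrite /lcoef big_ord0 /Sp /= mulr0 coef0 if_same.
rewrite /lcoef size_rcons big_ord_recr /=.
rewrite (eq_bigr (fun i : 'I_(size t) => (if 0 <= k + (i.+1)%:Z then f`_`|k + (i.+1)%:Z| else 0) * t`_i)); last first.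
  by move=> i _; rewrite /= nth_rcons ltn_ord.
rewrite -/(lcoef f t k) IH nth_rcons ltnn eqxx Sp_rcons.
rewrite -addn1 PoszD addrA.
case: (k + (size t)%:Z) => [m|m].
  rewrite -PoszD addn1 /= mulrDr mulrA coefD coefMX coefMC /=. done.
case: m => [|m] /=.
  by rewrite add0r mulrDr mulrA coefD coefMX coefMC /= add0r.
by rewrite mul0r add0r.
Qed.
Ltac nlia0 :=
  repeat match goal with
  | H : is_true (_ && _) |- _ => move/andP: H => [? ?]
  | H : is_true (leq _ _) |- _ => move/ssrnat.leP: H => H
  | H : is_true (~~ leq _ _) |- _ => move/negP: H => /ssrnat.leP H
  | H : is_true (@eq_op _ (_ : nat) _) |- _ => move/eqP: H => H
  end;
  lazymatch goal with
  | |- is_true (leq _ _) => apply/ssrnat.leP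
  | |- is_true (@eq_op _ _ _) => apply/eqP
  | _ => idtac end;
  unfold addn, subn, muln in *; lia.
Ltac nlia := intros; repeat match goal with |- is_true (_ && _) => apply/andP; split end; nlia0.

Lemma idxE (d N j : nat) : (j <= d + N)%N -> (d%:Z - j%:Z + N%:Z) = (d + N - j)%N%:Z.
Proof. by move=> h; rewrite addrAC -PoszD subzn. Qed.

Lemma coef_deg {D : idomainType} (f : {poly D}) i : (deg f < i)%N -> f`_i = 0.
Proof. move=> h; apply: nth_default; apply: leq_trans (leqSpred _) h. Qed.

Lemma annE {D : idomainType} (f : {poly D}) t :
  ann f t <-> forall i, (deg f <= i < size t)%N -> (f * Sp t)`_i = 0.
Proof.
split.
  case=> [->|H] i /andP [h1 h2]; first by rewrite mul0r coef0.
  have hj : (deg f < deg f + size t - i <= size t)%N by apply/andP; split; nlia.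
  move: (H _ hj); rewrite lcoefE idxE; last by nlia.
  by have -> : (deg f + size t - (deg f + size t - i) = i)%N by nlia.
move=> H; right=> j /andP [h1 h2].
rewrite lcoefE idxE; last by nlia.
rewrite /=; apply: H; apply/andP; split; nlia.
Qed.

Lemma DeltaE {D : idomainType} (f : {poly D}) t : Delta f t = (f * Sp t)`_(deg f).
Proof. by rewrite /Delta lcoefE idxE ?leq_addl // addnK. Qed.

Lemma Sp_take {D : idomainType} (s : seq D) j : (j < size s)%N ->
  Sp (take j.+1 s) = Sp (take j s) * 'X + (s`_j)%:P.
Proof. by move=> h; rewrite (take_nth 0 h) Sp_rcons. Qed.

Lemma coefS {D : idomainType} (f q : {poly D}) c i :
  (f * (q * 'X + c%:P))`_i.+1 = (f * q)`_i + f`_i.+1 * c.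
Proof. by rewrite mulrDr mulrA coefD coefMX coefMC. Qed.

Lemma coef0S {D : idomainType} (f q : {poly D}) c :
  (f * (q * 'X + c%:P))`_0 = f`_0 * c.
Proof. by rewrite mulrDr mulrA coefD coefMX coefMC add0r. Qed.

Lemma ann_rcons {D : idomainType} (f : {poly D}) t a : ann f (rcons t a) -> ann f t.
Proof.
rewrite !annE size_rcons Sp_rcons => H i /andP [h1 h2].
have := H i.+1; rewrite coefS (@coef_deg _ f) ?mul0r ?addr0; last by nlia.
by apply; apply/andP; split; nlia.
Qed.

Lemma ann_up {D : idomainType} (f : {poly D}) t a i :
  ann f t -> (deg f < i <= size t)%N -> (f * Sp (rcons t a))`_i = 0.
Proof.
rewrite annE => H /andP [h1 h2]; case: i h1 h2 => [|i] h1 h2; first by [].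
rewrite Sp_rcons coefS (@coef_deg _ f) ?mul0r ?addr0; last by nlia.
by apply: H; apply/andP; split; nlia.
Qed.

Lemma massey {D : idomainType} (f g : {poly D}) t a :
  ann f t -> Delta f (rcons t a) != 0 -> g != 0 -> ann g (rcons t a) ->
  (size t < deg f + deg g)%N.
Proof.
move=> Af Df gn0 Ag; rewrite ltnNge; apply/negP => hK.
set P := Sp (rcons t a).
have E : g * (f * P) = f * (g * P) by rewrite !mulrA (mulrC g).
have := congr1 (fun p : {poly D} => p`_(deg f + deg g)) E => /=.
rewrite !coefM.
have hg : (deg g < (deg f + deg g).+1)%N by rewrite ltnS leq_addl.
rewrite (bigD1 (Ordinal hg)) //=.
rewrite big1; last first.
  move=> u /eqP hu.
  have [hl|hl] := ltnP (deg g) u.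
    by rewrite coef_deg // mul0r.
  rewrite (@ann_up _ f t a) ?mulr0 //.
  have hu' : (nat_of_ord u != deg g) by apply/eqP=> e; apply: hu; apply: val_inj.
  have hu2 : (u < deg g)%N by rewrite ltn_neqAle hu' hl.
  apply/andP; split; nlia.
rewrite big1; last first.
  move=> u _.
  have [hl|hl] := ltnP (deg f) u.
    by rewrite coef_deg // mul0r.
  move: Ag; rewrite annE => Ag; rewrite Ag ?mulr0 //.
  rewrite size_rcons; have := ltn_ord u; move=> hu; apply/andP; split; nlia.
rewrite addr0 addnK -DeltaE => /eqP; apply/negP.
rewrite mulf_neq0 // -lead_coefE lead_coef_eq0 //.
Qed.

Lemma hasAnnDegP {D : idomainType} (t : seq D) d :
  hasAnnDeg t d <-> exists f : {poly D}, f != 0 /\ ann f t /\ deg f = d.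
Proof.
rewrite /hasAnnDeg; case: excluded_middle_informative => // H; split=> //.
Qed.

Lemma LofE {D : idomainType} (f : {poly D}) t : isMin f t -> Lof t = deg f.
Proof.
move=> [fn0 [Af Mf]].
have Hd : hasAnnDeg t (deg f) by apply/hasAnnDegP; exists f.
rewrite /Lof; case: excluded_middle_informative => [H|H]; last by case: H; exists (deg f).
case: ex_minnP => m /hasAnnDegP [g [gn0 [Ag <-]]] Hmin.
by apply/eqP; rewrite eqn_leq Hmin // Mf.
Qed.

Lemma comb_size {D : idomainType} (f g : {poly D}) (dp dj : D) (a b : nat) :
  dp != 0 -> f != 0 -> (b + deg g < a + deg f)%N ->
  size (dp *: ('X^a * f) - dj *: ('X^b * g)) = (a + size f)%N.
Proof.
move=> dpn0 fn0 hlt.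
have sf : size f = (deg f).+1 by rewrite /deg prednK // lt0n size_poly_eq0.
have s1 : size (dp *: ('X^a * f)) = (a + size f)%N by rewrite size_scale // mulrC size_mulXn.
rewrite size_polyDl s1 // size_polyN.
apply: (leq_ltn_trans (size_scale_leq _ _)).
apply: (leq_ltn_trans (size_polyMleq _ _)).
rewrite size_polyXn sf /=.
have : (size g <= (deg g).+1)%N by rewrite /deg leqSpred.
move=> hg; set u := size g in hg *; nlia.
Qed.

Lemma shift_take {D : idomainType} (g : {poly D}) (s : seq D) k x d :
  (k + d <= size s)%N -> (deg g <= x)%N ->
  (g * Sp (take (k + d) s))`_(x + d) = (g * Sp (take k s))`_x.
Proof.
move=> hd hx; elim: d hd => [|d IH] hd; first by rewrite !addn0.
rewrite addnS Sp_take; last by nlia.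
rewrite addnS coefS (@coef_deg _ g) ?mul0r ?addr0; last by nlia.
by apply: IH; nlia.
Qed.

Lemma comb_ann {D : idomainType} (s : seq D) (f g h : {poly D}) (dp dj : D) (a b N k : nat) :
  (N < size s)%N -> (k < N)%N ->
  ann f (take N s) -> Delta f (take N.+1 s) = dj ->
  ann g (take k s) -> Delta g (take k.+1 s) = dp ->
  (a + deg f = b + deg g + (N - k))%N ->
  h = dp *: ('X^a * f) - dj *: ('X^b * g) ->
  deg h = (a + deg f)%N ->
  ann h (take N.+1 s).
Proof.
move=> hN hk Af Df Ag Dg heq -> hdeg.
apply/annE; rewrite hdeg size_takel // => i /andP [h1 h2].
have [r Er] : exists r, i = (a + deg f + r)%N by exists (i - (a + deg f))%N; nlia.
subst i.
rewrite mulrBl -!scalerAl -!mulrA coefB !coefZ !coefXnM.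
have -> : (a + deg f + r < a)%N = false by apply/negbTE; rewrite -leqNgt; nlia.
have -> : (a + deg f + r < b)%N = false by apply/negbTE; rewrite -leqNgt; nlia.
have -> : (a + deg f + r - a = deg f + r)%N by nlia.
have -> : (a + deg f + r - b = deg g + r + (N - k))%N by nlia.
have -> : take N.+1 s = take (k.+1 + (N - k)) s by congr take; nlia.
rewrite shift_take; last 2 first.
- by nlia.
- by rewrite leq_addr.
have -> : (k.+1 + (N - k))%N = N.+1 by nlia.
rewrite (take_nth 0 hN) (take_nth 0 (_ : (k < size s)%N)); last by nlia.
case: r h1 h2 => [|r] h1 h2.
  rewrite !addn0 -!DeltaE -(take_nth 0 hN) -(take_nth 0 (_ : (k < size s)%N)); last by nlia.
  by rewrite Df Dg mulrC subrr.
rewrite (@ann_up _ f (take N s) s`_N) //; last first.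
  by rewrite size_takel; [apply/andP; split; nlia | nlia].
rewrite (@ann_up _ g (take k s) s`_k) //; last first.
  by rewrite size_takel; [apply/andP; split; nlia | nlia].
by rewrite !mulr0 subrr.
Qed.

Lemma eidx_gt0 {D : idomainType} j (m : {poly D}) : (0 < eidx j m) = (2 * deg m < j.+1)%N.
Proof. by rewrite /eidx subr_gt0 ltz_nat. Qed.

Lemma eidx_pos {D : idomainType} j (m : {poly D}) : (2 * deg m < j.+1)%N ->
  `|Num.max (eidx j m) 0|%N = (j.+1 - 2 * deg m)%N /\ `|Num.max (- eidx j m) 0|%N = 0%N.
Proof.
move=> h; have he : eidx j m = (j.+1 - 2 * deg m)%N%:Z by rewrite /eidx subzn // ltnW.
have hp : 0 < eidx j m by rewrite eidx_gt0.
rewrite he; split.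
  by rewrite max_l.
rewrite max_r //; rewrite -he oppr_le0; exact: ltW.
Qed.

Lemma eidx_npos {D : idomainType} j (m : {poly D}) : (j.+1 <= 2 * deg m)%N ->
  `|Num.max (eidx j m) 0|%N = 0%N /\ `|Num.max (- eidx j m) 0|%N = (2 * deg m - j.+1)%N.
Proof.
move=> h; have he : - eidx j m = (2 * deg m - j.+1)%N%:Z by rewrite /eidx opprB subzn.
have hp : eidx j m <= 0 by rewrite leNgt eidx_gt0 -leqNgt.
split; first by rewrite max_r.
by rewrite he max_l.
Qed.

Lemma inv_main {D : idomainType} (eps : D) (s : seq D) j : (j <= size s)%N ->
  forall f m g dp, bmstate eps s j = (f, m, g, dp) ->
  f != 0 /\ dp != 0 /\ isMin f (take j s) /\
  ((m = -1 /\ deg f = 0%N /\ deg g = 0%N) \/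
   exists k : nat, m = k%:Z /\ (k < j)%N /\ (deg f + deg g = k.+1)%N /\
     ann g (take k s) /\ Delta g (take k.+1 s) = dp /\ g = BMmu eps s k).
Proof.
elim: j => [|j IH] hj f m g dp.
  move=> [<- <- <- <-]; split; first exact: oner_neq0.
  split; first exact: oner_neq0.
  split; last first.
    left; split=> //; split; first by rewrite /deg size_poly1.
    by rewrite /deg size_polyC; case: (eps != 0).
  split; first exact: oner_neq0.
  split; first by apply/annE; rewrite take0 => i; rewrite andbF.
  by move=> g' _ _; rewrite /deg size_poly1.
case E: (bmstate eps s j) => [[[f0 m0] g0] dp0].
move=> /=; rewrite E.
have [f0n0 [dp0n0 [[_ [Af0 Mf0] ] Br]]] := IH (ltnW hj) _ _ _ _ E.
have Et : take j.+1 s = rcons (take j s) s`_j by rewrite (take_nth 0 hj).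
have szt : size (take j s) = j by rewrite size_takel // ltnW.
have Mono : forall g', g' != 0 -> ann g' (take j.+1 s) -> (deg f0 <= deg g')%N.
  by move=> g' g'n0; rewrite Et => /ann_rcons; apply: Mf0.
case: ifP => [/eqP Hd|/eqP Hd].
  move=> -[<- <- <- <-].
  split=> //; split=> //; split.
    split=> //; split=> //.
    apply/annE; rewrite size_takel // => i /andP [h1 h2].
    case: (ltngtP (deg f0) i) h1 => // [hi|hi] _.
      rewrite Et; apply: ann_up => //; rewrite szt; nlia.
    by rewrite -hi -DeltaE; exact: Hd.
  case: Br => [|[k [-> [hk rest]]]]; first by left.
  by right; exists k; split=> //; split=> //; nlia.
have Massey : forall g', g' != 0 -> ann g' (take j.+1 s) -> (j < deg f0 + deg g')%N.
  move=> g' g'n0; rewrite Et => Ag'; rewrite -szt; apply: massey Ag' => //.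
  by rewrite -Et; apply/eqP.
have Hd' : Delta f0 (take j.+1 s) != 0 by apply/eqP.
case: ifP => He; rewrite eidx_gt0 in He.
  have [-> ->] := @eidx_pos _ j f0 He.
  move=> -[<- <- <- <-].
  set nm := (dp0 *: _ - _).
  have Hlt : (0 + deg g0 < j.+1 - 2 * deg f0 + deg f0)%N.
    case: Br => [[_ [h1 h2]]|[k [_ [hk [hs _]]]]]; nlia.
  have Hs := @comb_size _ f0 g0 dp0 (Delta f0 (take j.+1 s)) _ _ dp0n0 f0n0 Hlt.
  have sf : size f0 = (deg f0).+1 by rewrite /deg prednK // lt0n size_poly_eq0.
  have Hdeg : deg nm = (j.+1 - 2 * deg f0 + deg f0)%N by rewrite /deg /nm Hs sf addnS.
  have nmn0 : nm != 0 by rewrite -size_poly_eq0 /nm Hs sf addnS.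
  split=> //; split=> //; split.
    split=> //; split.
      case: Br => [[_ [h1 h2]]|[k [_ [hk [hs [Ag0 [Dg0 _]]]]]]].
        apply/annE; rewrite Hdeg size_takel // => i /andP [i1 i2]; nlia.
      apply: (@comb_ann _ s f0 g0 nm dp0 _ _ _ j k hj hk Af0 erefl Ag0 Dg0 _ erefl Hdeg).
      nlia.
    move=> g' g'n0 Ag'; have := Mono _ g'n0 Ag'; have := Massey _ g'n0 Ag'.
    rewrite Hdeg; nlia.
  right; exists j; split=> //; split=> //; split; first by rewrite Hdeg; nlia.
  by split=> //; split=> //; rewrite /BMmu E.
have He' : (j.+1 <= 2 * deg f0)%N by rewrite leqNgt He.
have [-> ->] := @eidx_npos _ j f0 He'.
move=> -[<- <- <- <-].
set nm := (dp0 *: _ - _).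
case: Br => [[_ [h1 h2]]|[k [Em [hk [hs [Ag0 [Dg0 Eg0]]]]]]].
  by move: He'; rewrite h1.
have Hlt : (2 * deg f0 - j.+1 + deg g0 < 0 + deg f0)%N by nlia.
have Hs := @comb_size _ f0 g0 dp0 (Delta f0 (take j.+1 s)) _ _ dp0n0 f0n0 Hlt.
have sf : size f0 = (deg f0).+1 by rewrite /deg prednK // lt0n size_poly_eq0.
have Hdeg : deg nm = (0 + deg f0)%N by rewrite /deg /nm Hs sf addnS.
have nmn0 : nm != 0 by rewrite -size_poly_eq0 /nm Hs sf addnS.
split=> //; split=> //; split.
  split=> //; split.
    apply: (@comb_ann _ s f0 g0 nm dp0 _ _ _ j k hj hk Af0 erefl Ag0 Dg0 _ erefl Hdeg).
    nlia.
  move=> g' g'n0 Ag'; have := Mono _ g'n0 Ag'.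
  rewrite Hdeg; nlia.
right; exists k; split=> //; split; first by nlia.
by split=> //; rewrite Hdeg; nlia.
Qed.

Lemma zeq (P Q R : nat) : (P + R = Q + 1)%N -> P%:Z - Q%:Z = - R%:Z + 1.
Proof.
move=> h.
have H : P%:Z + R%:Z = Q%:Z + 1 by rewrite -PoszD h PoszD.
by rewrite -(addrK R%:Z P%:Z) H addrAC (addrAC Q%:Z) subrr add0r addrC.
Qed.

Lemma zeq2 (a b k : nat) : (a + b = k.+1)%N -> a%:Z = k%:Z + 1 - b%:Z.
Proof.
move=> h; have -> : a = (k.+1 - b)%N by nlia.
rewrite (_ : k%:Z + 1 = k.+1%:Z); last by rewrite -addn1 PoszD.
by rewrite subzn //; nlia.
Qed.

Lemma eidxS {D : idomainType} j (m : {poly D}) : eidx j.+1 m = eidx j m + 1.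
Proof. by rewrite /eidx addrAC -PoszD addn1. Qed.

Lemma step0 {D : idomainType} (eps : D) s j f0 m0 g0 dp0 :
  bmstate eps s j = (f0, m0, g0, dp0) -> Delta f0 (take j.+1 s) = 0 ->
  bmstate eps s j.+1 = (f0, m0, g0, dp0).
Proof. by move=> E H; rewrite /= E; case: ifP => // /eqP. Qed.

Lemma step_pos {D : idomainType} (eps : D) s j f0 m0 g0 dp0 :
  bmstate eps s j = (f0, m0, g0, dp0) -> Delta f0 (take j.+1 s) != 0 ->
  (2 * deg f0 < j.+1)%N ->
  bmstate eps s j.+1 = (dp0 *: ('X^(j.+1 - 2 * deg f0) * f0)
       - Delta f0 (take j.+1 s) *: ('X^0 * g0), j%:Z, f0, Delta f0 (take j.+1 s)).
Proof.
move=> E H He; rewrite /= E; case: ifP => [/eqP H'|_]; first by rewrite H' eqxx in H.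
have [e1 e2] := @eidx_pos _ j f0 He.
by rewrite eidx_gt0 He e1 e2.
Qed.

Lemma step_npos {D : idomainType} (eps : D) s j f0 m0 g0 dp0 :
  bmstate eps s j = (f0, m0, g0, dp0) -> Delta f0 (take j.+1 s) != 0 ->
  (j.+1 <= 2 * deg f0)%N ->
  bmstate eps s j.+1 = (dp0 *: ('X^0 * f0)
       - Delta f0 (take j.+1 s) *: ('X^(2 * deg f0 - j.+1) * g0), m0, g0, dp0).
Proof.
move=> E H He; rewrite /= E; case: ifP => [/eqP H'|_]; first by rewrite H' eqxx in H.
have [e1 e2] := @eidx_npos _ j f0 He.
by rewrite eidx_gt0 ltnNge He e1 e2.
Qed.

Theorem mainTheorem4 (D : idomainType) (n : nat) (eps : D) (s : seq D) :
  (1 <= n)%N -> size s = n ->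
  let mu := BMmu eps s in
  let L := fun j : nat => Lof (take j s) in
  let e := BMe eps s in
  isMin (mu n) s /\
  (forall j : nat, (j <= n)%N -> deg (mu j) = L j) /\
  (BMDelta eps s n = 0 -> L n = L n.-1 /\ e n = e n.-1 + 1) /\
  (BMDelta eps s n != 0 ->
     (L n = deg (mu n) /\
      (deg (mu n))%:Z = Num.max (e n.-1) 0 + (L n.-1)%:Z /\
      (exists k : nat, BMjp eps s n = k%:Z /\
                       (L n)%:Z = k%:Z + 1 - (L k)%:Z)) /\
     e n = - `|e n.-1| + 1).
Proof.
move=> hn hsz mu L e.
have Hmin : forall j, (j <= n)%N -> isMin (mu j) (take j s).
  move=> j hj; rewrite /mu /BMmu.
  case E: (bmstate eps s j) => [[[f m] g dp]] /=.
  have := @inv_main _ eps s j _ f m g dp E; rewrite hsz => /(_ hj).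
  by case=> _ [_ [H _]].
have HL : forall j, (j <= n)%N -> deg (mu j) = L j.
  by move=> j hj; rewrite /L (@LofE _ _ _ (Hmin j hj)).
split; first by rewrite -hsz -{2}(take_size s) hsz; apply: Hmin.
split=> //.
case: n hn hsz Hmin HL => // n1 _ hsz Hmin HL /=.
case E: (bmstate eps s n1) => [[[f0 m0] g0] dp0].
have hn1 : (n1 < size s)%N by rewrite hsz.
have [f0n0 [dp0n0 [_ Br]]] := @inv_main _ eps s n1 (ltnW hn1) _ _ _ _ E.
have Mu1 : BMmu eps s n1 = f0 by rewrite /BMmu E.
have L1 : L n1 = deg f0 by rewrite -HL // /mu Mu1.
have HBD : BMDelta eps s n1.+1 = Delta f0 (take n1.+1 s) by rewrite /BMDelta /= Mu1.
rewrite HBD.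
split.
  move=> Hd; have E' := @step0 _ _ _ _ _ _ _ _ E Hd.
  have Mu2 : BMmu eps s n1.+1 = f0 by rewrite /BMmu E'.
  split; first by rewrite -HL // /mu Mu2 L1.
  by rewrite /e /BMe Mu2 Mu1 eidxS.
move=> Hd.
have [He|He] := ltnP (2 * deg f0) n1.+1.
  have E' := @step_pos _ _ _ _ _ _ _ _ E Hd He.
  set nm := (dp0 *: _ - _) in E'.
  have Mu2 : BMmu eps s n1.+1 = nm by rewrite /BMmu E'.
  have [_ [_ [_ Br2]]] := @inv_main _ eps s n1.+1 hn1 _ _ _ _ E'.
  have Hdn : (deg nm + deg f0 = n1.+1)%N.
    case: Br2 => [[h _]|[k [hk [_ [hs _]]]]]; first by [].
    by move: hk hs => [->].
  have Ln : L n1.+1 = deg nm by rewrite -HL // /mu Mu2.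
  have he : eidx n1 f0 = (n1.+1 - 2 * deg f0)%N%:Z by rewrite /eidx subzn // ltnW.
  have hp : 0 < eidx n1 f0 by rewrite eidx_gt0.
  split.
    split; first by rewrite Ln /mu Mu2.
    split.
      rewrite /mu Mu2 /e /BMe Mu1 L1 max_l; last exact: ltW.
      by rewrite he -PoszD; congr Posz; nlia.
    exists n1; split; first by rewrite /BMjp E'.
    by rewrite Ln L1; apply: zeq2.
  rewrite /e /BMe Mu2 Mu1 ger0_norm; last exact: ltW.
  rewrite he /eidx; apply: zeq; nlia.
have E' := @step_npos _ _ _ _ _ _ _ _ E Hd He.
set nm := (dp0 *: _ - _) in E'.
have Mu2 : BMmu eps s n1.+1 = nm by rewrite /BMmu E'.
have [_ [_ [_ Br2]]] := @inv_main _ eps s n1.+1 hn1 _ _ _ _ E'.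
case: Br => [[_ [h1 _]]|[k [Em [hk [hs [_ [_ Eg0]]]]]]].
  by move: He; rewrite h1.
have Hdn : (deg nm + deg g0 = k.+1)%N.
  case: Br2 => [[h _]|[k' [hk' [_ [hs' _]]]]]; first by rewrite Em in h.
  by rewrite Em in hk'; move: hk' hs' => [->].
have Ln : L n1.+1 = deg nm by rewrite -HL // /mu Mu2.
have hp : eidx n1 f0 <= 0 by rewrite leNgt eidx_gt0 -leqNgt.
split.
  split; first by rewrite Ln /mu Mu2.
  split.
    rewrite /mu Mu2 /e /BMe Mu1 L1 max_r // add0r; congr Posz; nlia.
  exists k; split; first by rewrite /BMjp E'.
  have Lk : L k = deg g0 by rewrite -HL ?Eg0 //; nlia.
  by rewrite Ln Lk; apply: zeq2.
rewrite /e /BMe Mu2 Mu1 ler0_norm // opprK.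
have -> : eidx n1.+1 nm = eidx n1.+1 f0 by rewrite /eidx (_ : deg nm = deg f0) //; nlia.
exact: eidxS.
Qed.
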